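(* Let $0<b<c$ and $x_1,x_2,\dots\in\mathbb{R}^d$. Define $D_0=\frac{bc}{c-b}I$ and $D_t=\big(D_{t-1}^{-1}+c^{-1}I\big)^{-1}+x_tx_t^\top$ for $t\ge1$, and $D'_{t-1}=\big(I+c^{-1}D_{t-1}\big)^{-1}$. Then for all $t\ge1$, \[ D'_{t-1}D_t^{-1}x_tx_t^\top D_t^{-1}D'_{t-1}-D_{t-1}^{-1}+D'_{t-1}\big(D_t^{-1}D'_{t-1}+c^{-1}I\big)\preceq 0, \] where $A\preceq 0$ means $A$ is negative semidefinite. *)

(* Defs.v *)
From HB Require Import structures.
From mathcomp Require Import all_boot all_order all_algebra.
Set Implicit Arguments. Unset Strict Implicit. Unset Printing Implicit Defensive.
Import Order.TTheory GRing.Theory Num.Theory.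
Local Open Scope ring_scope.

Definition nsd (R : realFieldType) (d : nat) (A : 'M[R]_d) : Prop :=
  A^T = A /\ forall v : 'cV[R]_d, (v^T *m A *m v) 0 0 <= 0.

Fixpoint Dseq (R : realFieldType) (d : nat) (b c : R) (x : nat -> 'cV[R]_d)
  (t : nat) : 'M[R]_d :=
  match t with
  | 0 => (b * c / (c - b))%:M
  | t'.+1 => invmx (invmx (Dseq b c x t') + c^-1%:M) + x t'.+1 *m (x t'.+1)^T
  end.

Definition Dprime (R : realFieldType) (d : nat) (b c : R) (x : nat -> 'cV[R]_d)
  (t : nat) : 'M[R]_d :=
  invmx (1%:M + c^-1 *: Dseq b c x t).

(* Main.v *)
Require Import Defs.
From HB Require Import structures.
From mathcomp Require Import all_boot all_order all_algebra.
From mathcomp Require Import ring lra.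
Import Order.TTheory GRing.Theory Num.Theory.
Local Open Scope ring_scope.
Set Implicit Arguments. Unset Strict Implicit.

Section S.
Variables (R : realFieldType) (d : nat).
Implicit Types (M N : 'M[R]_d) (v w : 'cV[R]_d).

Definition q M v := (v^T *m M *m v) 0 0.
Definition pd M := M^T = M /\ forall v, v != 0 -> 0 < q M v.
Definition psd M := M^T = M /\ forall v, 0 <= q M v.

Lemma sqE v : (v^T *m v) 0 0 = \sum_i (v i 0) ^+ 2.
Proof. by rewrite mxE; apply: eq_bigr => i _; rewrite mxE expr2. Qed.

Lemma sq_ge0 v : 0 <= (v^T *m v) 0 0.
Proof. rewrite sqE; apply: sumr_ge0 => i _; exact: sqr_ge0. Qed.

Lemma sq_gt0 v : v != 0 -> 0 < (v^T *m v) 0 0.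
Proof.
move=> nz; rewrite lt_def sq_ge0 andbT; apply: contra nz; rewrite sqE => /eqP H.
have H2 := psumr_eq0P (fun i _ => sqr_ge0 (v i 0)) H.
apply/eqP/matrixP => i j; rewrite (ord1 j) mxE.
by apply/eqP; rewrite -sqrf_eq0; apply/eqP; apply: H2.
Qed.

Lemma qZ a M v : q (a *: M) v = a * q M v.
Proof. by rewrite /q -scalemxAr -scalemxAl mxE. Qed.

Lemma qD M N v : q (M + N) v = q M v + q N v.
Proof. by rewrite /q mulmxDr mulmxDl mxE. Qed.

Lemma q_outer w v : q (w *m w^T) v = ((w^T *m v) 0 0) ^+ 2.
Proof.
rewrite /q !mulmxA -(mulmxA _ w^T v) mxE big_ord1 expr2; congr (_ * _).
by rewrite -[v^T *m w]trmxK trmx_mul trmxK mxE.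
Qed.
Lemma pd_psd M : pd M -> psd M.
Proof.
move=> [s p]; split=> // v; case: (eqVneq v 0) => [->|/p/ltW //].
by rewrite /q !mulmx0 mxE.
Qed.

Lemma pd_scalar a : 0 < a -> pd (a%:M).
Proof.
move=> a0; split; first exact: tr_scalar_mx.
move=> v nz; rewrite -scalemx1 qZ pmulr_rgt0 // /q mulmx1; exact: sq_gt0.
Qed.

Lemma pd_add M N : pd M -> psd N -> pd (M + N).
Proof.
move=> [sM pM] [sN pN]; split; first by rewrite raddfD /= sM sN.
by move=> v nz; rewrite qD ltr_pwDl // pM.
Qed.

Lemma psd_outer w : psd (w *m w^T).
Proof. by split; [rewrite trmx_mul trmxK | move=> v; rewrite q_outer sqr_ge0]. Qed.

Lemma psd_scale a M : 0 <= a -> psd M -> psd (a *: M).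
Proof.
move=> a0 [sM pM]; split; first by rewrite linearZ /= sM.
by move=> v; rewrite qZ mulr_ge0.
Qed.

Lemma pd_unit M : pd M -> M \in unitmx.
Proof.
move=> [sM pM]; rewrite unitmxE unitfE; apply/negP => /det0P [u nz uM].
have : 0 < q M u^T by apply: pM; rewrite -trmx0 (inj_eq trmx_inj).
by rewrite /q trmxK uM mul0mx mxE ltxx.
Qed.

Lemma pd_inv M : pd M -> pd (invmx M).
Proof.
move=> pM; have uM := pd_unit pM; case: pM => sM pM; split.
  by rewrite trmx_inv sM.
move=> v nz; set w := invmx M *m v.
have vE : v = M *m w by rewrite /w mulmxA mulmxV // mul1mx.
have wnz : w != 0 by apply: contra nz => /eqP w0; rewrite vE w0 mulmx0.
suff -> : q (invmx M) v = q M w by apply: pM.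
rewrite /q {1}vE trmx_mul sM -(mulmxA w^T M) mulmxV // mulmx1.
by rewrite -(mulmxA w^T) -vE.
Qed.
End S.
Section M.
Variables (R : realFieldType) (d : nat).
Lemma main (A : 'M[R]_d) (x : 'cV[R]_d) (c : R) : 0 < c -> pd A ->
 nsd (invmx (1%:M + c^-1 *: A) *m invmx (invmx (invmx A + c^-1%:M) + x *m x^T) *m (x *m x^T) *m invmx (invmx (invmx A + c^-1%:M) + x *m x^T) *m invmx (1%:M + c^-1 *: A) - invmx A + invmx (1%:M + c^-1 *: A) *m (invmx (invmx (invmx A + c^-1%:M) + x *m x^T) *m invmx (1%:M + c^-1 *: A) + c^-1%:M)).
Proof.
move=> c0 pA; have ci : 0 < c^-1 by rewrite invr_gt0.
set K := 1%:M + c^-1 *: A. set P := invmx K. set Ai := invmx A.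
set M := Ai + c^-1%:M. set D := invmx M + x *m x^T. set Di := invmx D.
have uA := pd_unit pA.
have pK : pd K := pd_add (@pd_scalar R d _ ltr01) (psd_scale (ltW ci) (pd_psd pA)).
have uK := pd_unit pK.
have pM : pd M := pd_add (pd_inv pA) (pd_psd (@pd_scalar R d _ ci)).
have uM := pd_unit pM.
have pD : pd D := pd_add (pd_inv pM) (psd_outer x).
have uD := pd_unit pD.
have sP : P^T = P by rewrite /P trmx_inv (proj1 pK).
have sM := proj1 pM.
have sDi : Di^T = Di := proj1 (pd_inv pD).
have KAi : K *m Ai = Ai + c^-1 *: 1%:M.
  by rewrite /K mulmxDl mul1mx -scalemxAl mulmxV.
have MK : M = Ai *m K.
  by rewrite /M /K mulmxDr mulmx1 -scalemxAr mulVmx // scalemx1.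
have KP : K *m P = 1%:M := mulmxV uK.
have PK : P *m K = 1%:M := mulVmx uK.
have I1 : Ai = P *m Ai + c^-1 *: P.
  by rewrite -[Ai in LHS]mul1mx -PK -mulmxA KAi mulmxDr -scalemxAr mulmx1.
have PMP : P *m M *m P = P *m Ai.
  by rewrite MK !mulmxA -[_ *m K *m P]mulmxA KP mulmx1.
set s := (x^T *m M *m x) 0 0.
have s0 : 0 <= s := (pd_psd pM).2 x.
set k := (1 + s)^-1.
have s1 : 1 + s != 0 by rewrite gt_eqF // ltr_pwDl.
have ks : 1 - k * s = k by rewrite /k; field.
have sE : x^T *m M *m x = s%:M := mx11_scalar _.
have xx : x *m x^T *m M *m x = s *: x.
  by rewrite -2!mulmxA (mulmxA x^T) sE mul_mx_scalar.
have H : D *m (M - k *: (M *m x *m x^T *m M)) = 1%:M.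
  rewrite /D mulmxDl !mulmxBr -!scalemxAr !mulmxA mulVmx // mul1mx.
  rewrite xx -scalemxAl -scalemxAl scalerA.
  set Y := x *m x^T *m M.
  have -> : Y - (k*s) *: Y = (1 - k*s) *: Y by rewrite scalerBl scale1r.
  by rewrite ks subrK.
have SM : Di = M - k *: (M *m x *m x^T *m M).
  by rewrite -[Di]mulmx1 -H mulmxA mulVmx // mul1mx.
have Dix : Di *m x = k *: (M *m x).
  have xx2 : M *m x *m x^T *m M *m x = s *: (M *m x).
    by rewrite -!mulmxA (mulmxA x^T) sE mul_mx_scalar -scalemxAr.
  rewrite SM mulmxBl -scalemxAl xx2 scalerA.
  by rewrite -{1}(scale1r (M *m x)) -scalerBl ks.
have xDi : x^T *m Di = k *: (x^T *m M).
  by rewrite -[LHS]trmxK trmx_mul trmxK sDi Dix linearZ /= trmx_mul sM.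
set w := P *m M *m x.
have wT : w^T = x^T *m M *m P by rewrite /w !trmx_mul sP sM mulmxA.
have T1e : P *m Di *m (x *m x^T) *m Di *m P = (k*k) *: (w *m w^T).
  rewrite wT /w !mulmxA -(mulmxA P Di x) Dix -(mulmxA _ x^T Di) xDi.
  by rewrite -!scalemxAr -!scalemxAl scalerA !mulmxA.
have T2e : P *m (Di *m P) = P *m M *m P - k *: (w *m w^T).
  rewrite SM mulmxBl mulmxBr -scalemxAl -scalemxAr wT /w !mulmxA.
  by [].
have gen : forall a u t e : 'M[R]_d, a - (u + e) + (t + e) = a + t - u.
  by move=> a u t e; rewrite opprD addrACA subrK.
rewrite mulmxDr mul_mx_scalar I1 -PMP gen T1e T2e addrA addrAC addrK -scalerBl.
have k0 : 0 < k by rewrite invr_gt0 ltr_pwDl.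
have k1 : k <= 1 by rewrite invf_le1 ?ler_wpDr // ltr_pwDl.
split; first by rewrite linearZ /= trmx_mul trmxK.
move=> v; change (q ((k*k-k) *: (w *m w^T)) v <= 0).
rewrite qZ q_outer; apply: mulr_le0_ge0; last exact: sqr_ge0.
nra.
Qed.
End M.

Lemma pd_D (R : realFieldType) (d : nat) (b c : R) (x : nat -> 'cV[R]_d)
  (hb : 0 < b) (hbc : b < c) (t : nat) : pd (Dseq b c x t).
Proof.
have c0 : 0 < c by apply: lt_trans hbc.
have ci : 0 < c^-1 by rewrite invr_gt0.
elim: t => [|t IH] /=.
  apply: pd_scalar; rewrite divr_gt0 ?mulr_gt0 // subr_gt0 //.
apply: pd_add; last exact: psd_outer.
exact: pd_inv (pd_add (pd_inv IH) (pd_psd (@pd_scalar R d _ ci))).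
Qed.

Theorem lemma3 (R : realFieldType) (d : nat) (b c : R) (x : nat -> 'cV[R]_d)
  (hb : 0 < b) (hbc : b < c) (t : nat) (ht : (1 <= t)%N) :
  nsd (Dprime b c x t.-1 *m invmx (Dseq b c x t) *m (x t *m (x t)^T)
         *m invmx (Dseq b c x t) *m Dprime b c x t.-1
       - invmx (Dseq b c x t.-1)
       + Dprime b c x t.-1 *m (invmx (Dseq b c x t) *m Dprime b c x t.-1
                               + c^-1%:M)).
Proof.
case: t ht => // t _ /=.
have c0 : 0 < c by apply: lt_trans hbc.
exact: main c0 (pd_D x hb hbc t).
Qed.
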